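(* Let $\mathbf P=(P,\leq,{}',0,1)$ be an orthogonal lub-complete poset. Then the following conditions are equivalent: (i) $\mathbf P$ is an orthocomplemented poset. (ii) For all $x,y\in P$, $x\leq y$ implies $x\rightarrow_S y=1$. (iii) For all $x,y\in P$, $x\leq y$ implies $x\rightarrow_D y=1$.
   Context: $(P,\leq,{}',0,1)$ is a bounded poset with an antitone involution ${}'$; orthogonal means $x\leq y'$ implies $x\vee y$ exists; lub-complete means for every lower bound $x$ of a finite subset $M$ there is a maximal lower bound of $M$ above $x$; orthocomplemented means $x\vee x'=1$ for all $x$. $L(x,y)$ is the set of common lower bounds and $\mathrm{Max}\,A$ the set of maximal elements of $A$; joins with sets are elementwise. Sasaki implication: $x\rightarrow_S y:=x'\vee \mathrm{Max}\,L(x,y)$; Dishkant implication: $x\rightarrow_D y:=y'\rightarrow_S x'=y\vee \mathrm{Max}\,L(x',y')$. ''$=1$'' means equal to $\{1\}$. *)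

(* Defs.v *)
From Stdlib Require Import List.

Record BIPoset : Type := {
  carrier :> Type;
  le : carrier -> carrier -> Prop;
  compl : carrier -> carrier;
  zero : carrier;
  one : carrier;
  le_refl : forall x, le x x;
  le_antisym : forall x y, le x y -> le y x -> x = y;
  le_trans : forall x y z, le x y -> le y z -> le x z;
  le_zero : forall x, le zero x;
  le_one : forall x, le x one;
  compl_antitone : forall x y, le x y -> le (compl y) (compl x);
  compl_invol : forall x, compl (compl x) = x
}.

Arguments le {_} _ _.
Arguments compl {_} _.
Arguments zero {_}.
Arguments one {_}.

Section Defs.
Variable P : BIPoset.

Definition is_join (a b j : P) : Prop :=
  le a j /\ le b j /\ forall u, le a u -> le b u -> le j u.

Definition Lset (x y : P) : P -> Prop := fun z => le z x /\ le z y.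

Definition MaxSet (A : P -> Prop) : P -> Prop :=
  fun z => A z /\ forall w, A w -> le z w -> w = z.

Definition join_set (a : P) (A : P -> Prop) : P -> Prop :=
  fun w => exists z, A z /\ is_join a z w.

Definition sasaki (x y : P) : P -> Prop := join_set (compl x) (MaxSet (Lset x y)).

Definition dishkant (x y : P) : P -> Prop := sasaki (compl y) (compl x).

Definition is_one_set (A : P -> Prop) : Prop := forall w, A w <-> w = one.

Definition orthogonal : Prop :=
  forall x y : P, le x (compl y) -> exists j, is_join x y j.

Definition lower_bound (M : list P) (x : P) : Prop := forall m, In m M -> le x m.

Definition lub_complete : Prop :=
  forall (M : list P) (x : P), lower_bound M x ->
    exists z, MaxSet (lower_bound M) z /\ le x z.

Definition orthocomplemented : Prop := forall x : P, is_join x (compl x) one.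

End Defs.

(* Main.v *)
Require Import Defs.

Lemma join_sym (P : BIPoset) (a b w : P) : is_join P a b w -> is_join P b a w.
Proof. intros [h1 [h2 h3]]. split; [exact h2|split; [exact h1|]]. intros u u1 u2; apply h3; auto. Qed.

Lemma join_uniq (P : BIPoset) (a b w v : P) : is_join P a b w -> is_join P a b v -> w = v.
Proof. intros [h1 [h2 h3]] [k1 [k2 k3]]. apply le_antisym; auto. Qed.

Lemma sasaki_le (P : BIPoset) (x y w : P) : le x y ->
  (sasaki P x y w <-> is_join P (compl x) x w).
Proof.
  intros Hxy. unfold sasaki, join_set. split.
  - intros [z [[[Hz1 Hz2] Hm] Hj]].
    assert (x = z). { apply Hm. split; [apply le_refl|exact Hxy]. exact Hz1. }
    subst; exact Hj.
  - intros Hj. exists x. split; [|exact Hj]. split.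
    + split; [apply le_refl|exact Hxy].
    + intros w0 [h1 h2] h3. apply le_antisym; auto.
Qed.

Definition Qp (P : BIPoset) := forall (a w : P), is_join P (compl a) a w <-> w = one.

Lemma oc_Q (P : BIPoset) : orthocomplemented P <-> Qp P.
Proof.
  split.
  - intros H a w. split.
    + intros Hj. apply (join_uniq P (compl a) a); auto. apply join_sym, H.
    + intros ->. apply join_sym, H.
  - intros H x. apply join_sym. apply H. reflexivity.
Qed.

Lemma ii_Q (P : BIPoset) : (forall x y : P, le x y -> is_one_set P (sasaki P x y)) <-> Qp P.
Proof.
  split.
  - intros H a w. rewrite <- (sasaki_le P a a w (le_refl _ a)). apply H, le_refl.
  - intros H x y Hxy w. rewrite (sasaki_le P x y w Hxy). apply H.
Qed.

Lemma iii_Q (P : BIPoset) : (forall x y : P, le x y -> is_one_set P (dishkant P x y)) <-> Qp P.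
Proof.
  split.
  - intros H a w. pose proof (H (compl a) (compl a) (le_refl _ _) w) as Hw.
    unfold dishkant in Hw. rewrite (sasaki_le P _ _ w (le_refl _ _)) in Hw.
    rewrite !compl_invol in Hw. exact Hw.
  - intros H x y Hxy w. unfold dishkant.
    rewrite (sasaki_le P _ _ w (compl_antitone _ _ _ Hxy)). apply H.
Qed.

Theorem theorem7 (P : BIPoset) :
  orthogonal P -> lub_complete P ->
  (orthocomplemented P <->
     (forall x y : P, le x y -> is_one_set P (sasaki P x y))) /\
  ((forall x y : P, le x y -> is_one_set P (sasaki P x y)) <->
     (forall x y : P, le x y -> is_one_set P (dishkant P x y))).
Proof.
  intros _ _. rewrite oc_Q, ii_Q, iii_Q. tauto.
Qed.
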